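(* Let $I$ and $J$ be intervals of $B$ and $\epsilon\ge0$. If $k_I$ and $k_J$ are $\Lambda_\epsilon$-interleaved, then either $I$ and $J$ are of the same type, or $k_I$ and $k_J$ are both $\Lambda_{2\epsilon}$-trivial.
   Context: Let $k$ be a field. The bipath poset $B$ has underlying set $(\mathbb{R}\times\{1,2\})\sqcup\{-\infty,+\infty\}$. Its order is: $x\le y$ iff $x=-\infty$, or $y=+\infty$, or $x=(s,i)$, $y=(t,i)$ with the same $i$ and $s\le t$. An interval of $B$ is a nonempty convex and connected subset (convex: $p,q\in I$, $p\le r\le q$ imply $r\in I$; connected: any two elements are joined by a finite sequence in $I$ with consecutive ones comparable). The interval module $k_I$ (a functor $B\to$ $k$-vector spaces) is $k$ on $I$ and $0$ elsewhere, with identity maps within $I$ and zero maps otherwise. The types of intervals are: - $\mathcal{U}$: intervals contained in $\mathbb{R}\times\{1\}$; - $\mathcal{D}$: intervals contained in $\mathbb{R}\times\{2\}$; - $\mathcal{B}=\{B\}$; - $\mathcal{L}$: intervals $\neq B$ containing $-\infty$; - $\mathcal{R}$: intervals $\neq B$ containing $+\infty$. Two intervals are of the same type if they lie in the same one of these sets. For $\epsilon\ge0$, $\Lambda_\epsilon\colon B\to B$ sends $(r,i)\mapsto(r+\epsilon,i)$ and fixes $\pm\infty$. Then: - $V(\epsilon)_b=V_{\Lambda_\epsilon b}$ and $V(\epsilon)(b,b')=V(\Lambda_\epsilon b,\Lambda_\epsilon b')$; $\phi(\epsilon)$ has components $\phi_{\Lambda_\epsilon b}$; - $V_{0\to\epsilon}$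 has components $V(b,\Lambda_\epsilon b)$; - $V$ is $\Lambda_\epsilon$-trivial if $V_{0\to\epsilon}=0$; - a $\Lambda_\epsilon$-interleaving is a pair $\alpha\colon V\to W(\epsilon)$, $\beta\colon W\to V(\epsilon)$ with $\beta(\epsilon)\alpha=V_{0\to2\epsilon}$ and $\alpha(\epsilon)\beta=W_{0\to2\epsilon}$. *)

(* Defs.v *)
From Stdlib Require Import Reals Relations.
From mathcomp Require Import all_boot all_order all_algebra.
Set Implicit Arguments. Unset Strict Implicit. Unset Printing Implicit Defensive.
Import GRing.Theory.
Local Open Scope ring_scope.

Inductive lane := lane1 | lane2.

Inductive bip :=
| Ninf : bip
| Pinf : bip
| Pt : R -> lane -> bip.

Definition ble (x y : bip) : Prop :=
  x = Ninf \/ y = Pinf \/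
  exists (s t : R) (i : lane), x = Pt s i /\ y = Pt t i /\ Rle s t.

Definition convex (I : bip -> bool) : Prop :=
  forall p q r, I p -> I q -> ble p r -> ble r q -> I r.

Definition comp_in (I : bip -> bool) : relation bip :=
  fun x y => I x /\ I y /\ (ble x y \/ ble y x).

Definition connected (I : bip -> bool) : Prop :=
  forall p q, I p -> I q -> clos_refl_trans bip (comp_in I) p q.

Definition is_interval (I : bip -> bool) : Prop :=
  (exists p, I p) /\ convex I /\ connected I.

Definition typeU (I : bip -> bool) : Prop := forall b, I b -> exists r, b = Pt r lane1.
Definition typeD (I : bip -> bool) : Prop := forall b, I b -> exists r, b = Pt r lane2.
Definition typeB (I : bip -> bool) : Prop := forall b, I b.
Definition typeL (I : bip -> bool) : Prop := ~ typeB I /\ I Ninf.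
Definition typeR (I : bip -> bool) : Prop := ~ typeB I /\ I Pinf.

Definition same_type (I J : bip -> bool) : Prop :=
  (typeU I /\ typeU J) \/ (typeD I /\ typeD J) \/ (typeB I /\ typeB J) \/
  (typeL I /\ typeL J) \/ (typeR I /\ typeR J).

Definition shift (e : R) (b : bip) : bip :=
  match b with
  | Pt r i => Pt (Rplus r e) i
  | x => x
  end.

(* ---------- pointwise finite-dimensional modules over B ----------
   V_b = k^(pdim b) (row vectors), V(b,b') : 'M_(pdim b, pdim b') acting by
   v |-> v *m V(b,b') (only meaningful for b <= b'). *)
Record pmod (k : fieldType) := PMod {
  pdim : bip -> nat;
  pmap : forall b b', 'M[k]_(pdim b, pdim b')
}.

Definition pmor (k : fieldType) (V W : pmod k) := forall b, 'M[k]_(pdim V b, pdim W b).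

Definition natural (k : fieldType) (V W : pmod k) (f : pmor V W) : Prop :=
  forall b b', ble b b' -> pmap V b b' *m f b' = f b *m pmap W b b'.

Definition pcomp (k : fieldType) (U V W : pmod k) (g : pmor V W) (f : pmor U V)
  : pmor U W := fun b => f b *m g b.

Definition pshift (k : fieldType) (e : R) (V : pmod k) : pmod k :=
  @PMod k (fun b => pdim V (shift e b)) (fun b b' => pmap V (shift e b) (shift e b')).

Definition mshift (k : fieldType) (e : R) (V W : pmod k) (f : pmor V W)
  : pmor (pshift e V) (pshift e W) := fun b => f (shift e b).

Definition unit0 (k : fieldType) (e : R) (V : pmod k) : pmor V (pshift e V) :=
  fun b => pmap V b (shift e b).

(* V_{0 -> 2eps} viewed as a morphism V -> V(eps)(eps): components
   V(b, Lambda_eps (Lambda_eps b)) = V(b, Lambda_{2eps} b). *)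
Definition unit00 (k : fieldType) (e : R) (V : pmod k)
  : pmor V (pshift e (pshift e V)) :=
  fun b => pmap V b (shift e (shift e b)).

Definition trivial_shift (k : fieldType) (e : R) (V : pmod k) : Prop :=
  forall b, unit0 e V b = 0.

Definition interleaving (k : fieldType) (e : R) (V W : pmod k)
  (a : pmor V (pshift e W)) (bt : pmor W (pshift e V)) : Prop :=
  natural a /\ natural bt /\
  pcomp (mshift e bt) a = unit00 e V /\
  pcomp (mshift e a) bt = unit00 e W.

Definition interleaved (k : fieldType) (e : R) (V W : pmod k) : Prop :=
  exists a bt, @interleaving k e V W a bt.

Definition imod (k : fieldType) (I : bip -> bool) : pmod k :=
  @PMod k (fun b => nat_of_bool (I b))
       (fun b b' => \matrix_(i, j) (if I b && I b' then (1 : k) else 0)).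

(* Main.v *)
Require Import Defs.
From Stdlib Require Import Reals Relations Classical.
From mathcomp Require Import all_boot all_order all_algebra.
Set Implicit Arguments. Unset Strict Implicit. Unset Printing Implicit Defensive.
Import GRing.Theory.

Lemma mul_mid0 (k : fieldType) m p n (A : 'M[k]_(m, p)) (B : 'M[k]_(p, n)) :
  p = 0%N -> (A *m B = 0)%R.
Proof. move=> Hp; subst p. by rewrite thinmx0 mul0mx. Qed.

Lemma cmx_neq0 (k : fieldType) m n (c : bool) :
  (0 < m)%N -> (0 < n)%N -> c ->
  (\matrix_(i < m, j < n) (if c then (1 : k) else 0))%R <> 0%R.
Proof.
case: m => // m; case: n => // n _ _ Hc H.
have := congr1 (fun M : 'M[k]_(m.+1, n.+1) => M ord0 ord0) H.
by rewrite /= !mxE Hc => /eqP; rewrite oner_eq0.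
Qed.

Lemma key (k : fieldType) (I J : bip -> bool) e
  (f : pmor (imod k I) (pshift e (imod k J)))
  (g : pmor (imod k J) (pshift e (imod k I))) :
  Defs.pcomp (mshift e g) f = unit00 e (imod k I) ->
  forall b, I b -> I (shift e (shift e b)) -> J (shift e b).
Proof.
move=> H b Ib Ib2; apply/negPn/negP => Jn.
have := congr1 (fun F : pmor (imod k I) (pshift e (pshift e (imod k I))) => F b) H.
rewrite /Defs.pcomp /unit00 /mshift /=.
rewrite (@mul_mid0 k _ _ _ _ _ ); last by rewrite (negbTE Jn).
move=> E; apply: (@cmx_neq0 k (nat_of_bool (I b)) (nat_of_bool (I (shift e (shift e b)))) (I b && I (shift e (shift e b)))).
- by rewrite Ib.
- by rewrite Ib2.
- by rewrite Ib Ib2.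
- by rewrite -E.
Qed.

Lemma lane_lem (I : bip -> bool) : connected I -> I Ninf = false -> I Pinf = false ->
  forall r i b, I (Pt r i) -> I b -> exists s, b = Pt s i.
Proof.
move=> cI N P r i b H1 H2.
have := cI _ _ H1 H2.
have gen : forall x y, clos_refl_trans bip (comp_in I) x y ->
  forall r i, x = Pt r i -> exists s, y = Pt s i.
  move=> x y; elim.
  - move=> x0 y0 [Ix [Iy [Hb|Hb]]] r0 i0 E0; subst x0.
    + case: Hb => [//|[Hy|[s [t [i' [E1 [E2 _]]]]]]].
      * by rewrite Hy P in Iy.
      * move: E1 E2 => [_ ->] ->; by exists t.
    + case: Hb => [Hy|[//|[s [t [i' [E1 [E2 _]]]]]]].
      * by rewrite Hy N in Iy.
      * move: E2 E1 => [_ ->] ->; by exists s.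
  - move=> x0 r0 i0 E0; subst x0; by exists r0.
  - move=> x0 y0 z0 _ IH1 _ IH2 r0 i0 E.
    have [s Es] := IH1 _ _ E. exact: (IH2 _ _ Es).
by move=> C; exact: (gen _ _ C r i).
Qed.

Lemma shift2 e r i : shift e (shift e (Pt r i)) = shift (Rplus e e) (Pt r i).
Proof. by rewrite /= Rplus_assoc. Qed.

Lemma allB (I J : bip -> bool) e :
  (forall b, I b -> I (shift e (shift e b)) -> J (shift e b)) ->
  typeB I -> typeB J.
Proof.
move=> K BI [| |r i].
- exact: (K Ninf).
- exact: (K Pinf).
- have := K (Pt (Rminus r e) i) (BI _) (BI _).
  by rewrite /= /Rminus Rplus_assoc Rplus_opp_l Rplus_0_r.
Qed.

Lemma triv_lane (I J : bip -> bool) e i j :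
  (forall b, I b -> I (shift e (shift e b)) -> J (shift e b)) ->
  I Ninf = false -> I Pinf = false -> i <> j ->
  (forall b, I b -> exists s, b = Pt s i) ->
  (forall b, J b -> exists s, b = Pt s j) ->
  forall k, trivial_shift (Rplus e e) (imod k I).
Proof.
move=> K N P ij LI LJ k b.
rewrite /unit0 /=.
have -> : (I b && I (shift (Rplus e e) b)) = false.
  case: b => [| |r i0]; first by rewrite N. by rewrite P.
  apply/negP => /andP [Ib Ib2].
  rewrite -shift2 in Ib2.
  have := K _ Ib Ib2 => /LJ [s /= [_ E]].
  have [s' [_ E']] := LI _ Ib. by apply: ij; rewrite -E' E.
by apply/matrixP => x y; rewrite !mxE.
Qed.

Theorem lemma4p9 (k : fieldType) (I J : bip -> bool) (eps : R) :
  is_interval I -> is_interval J -> Rle R0 eps ->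
  interleaved eps (imod k I) (imod k J) ->
  same_type I J \/
  (trivial_shift (Rplus eps eps) (imod k I) /\ trivial_shift (Rplus eps eps) (imod k J)).
Proof.
move=> [[p Ip] [_ cI]] [[q Jq] [_ cJ]] _ [a [bt [_ [_ [H1 H2]]]]].
have kIJ := key H1. have kJI := key H2.
have BIJ := allB kIJ. have BJI := allB kJI.
case NI: (I Ninf).
  have NJ : J Ninf by exact: (kIJ Ninf).
  left; case: (classic (typeB I)) => BI.
  - by right; right; left; split => //; exact: BIJ.
  - by right; right; right; left; split; split => // /BJI.
case PI: (I Pinf).
  have PJ : J Pinf by exact: (kIJ Pinf).
  left; case: (classic (typeB I)) => BI.
  - by right; right; left; split => //; exact: BIJ.
  - by right; right; right; right; split; split => // /BJI.
have NJ : J Ninf = false by apply/negP => H; have := kJI Ninf H H; rewrite /= NI.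
have PJ : J Pinf = false by apply/negP => H; have := kJI Pinf H H; rewrite /= PI.
case: p Ip => [| |r i] Ip; first by rewrite NI in Ip. by rewrite PI in Ip.
case: q Jq => [| |r' j] Jq; first by rewrite NJ in Jq. by rewrite PJ in Jq.
have LI := lane_lem cI NI PI Ip. have LJ := lane_lem cJ NJ PJ Jq.
case: i j LI LJ {Ip Jq} => [] [] LI LJ.
- by left; left; split.
- right; split; [apply: (triv_lane kIJ NI PI _ LI LJ) | apply: (triv_lane kJI NJ PJ _ LJ LI)]; discriminate.
- right; split; [apply: (triv_lane kIJ NI PI _ LI LJ) | apply: (triv_lane kJI NJ PJ _ LJ LI)]; discriminate.
- by left; right; left; split.
Qed.
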